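(* Let $(Y,\rho_Y)$ be a complete separable metric space, $I$ a finite set, $X=Y\times I$, $\bar X=X\times[0,\infty)$. Let $\{\pi_{ij}\}_{i,j\in I}$ be a right stochastic matrix, $\{S_i\}_{i\in I}$ jointly continuous semiflows $S_i:[0,\infty)\times Y\to Y$, $J$ a stochastic kernel on $Y$, and $\lambda>0$. Define the stochastic kernel $\bar P$ on $\bar X$ by $$\bar P((y,i,s),\bar A)=\sum_{j\in I}\pi_{ij}\int_0^\infty\lambda e^{-\lambda t}\int_Y\mathbb{1}_{\bar A}(u,j,t+s)\,J(S_i(t,y),du)\,dt.$$ Fix $y^*\in Y$ and put $V(y,i)=\rho_Y(y,y^* )$. Assume: (S1') there exist $M\geq0$, $\zeta\geq0$ with $\max_{i\in I}\rho_Y(S_i(t,y^* ),y^* )\leq Mt^\zeta$ for all $t\geq0$; (S2') there exists $L>0$ with $\rho_Y(S_i(t,y_1),S_i(t,y_2))\leq L\rho_Y(y_1,y_2)$ for all $t\geq0$, $y_1,y_2\in Y$, $i\in I$; (J1') there exist $a>0$, $b\geq0$ with $\int_Y\rho_Y^2(u,y^* )\,J(y,du)\leq a\rho_Y^2(y,y^* )+b$ for all $y\in Y$; and $2aL^2<1$. Then there exist constants $\Gamma>0$ and $C\geq0$ such that for every $t_0\geq0$ and the function $U_{t_0}:\bar X\to[0,\infty)$, $U_{t_0}(x,t)=e^{-\lambda(t_0-t)}V^2(x)\mathbb{1}_{[0,t_0]}(t)$, we have $$\sum_{n=0}^\infty\bar P^nU_{t_0}(x,0)\leq e^{-\Gamma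 t_0}V^2(x)+C\quad\text{for all }x\in X.$$
   Context: A semiflow satisfies $S_i(s,S_i(t,y))=S_i(s+t,y)$ and $S_i(0,y)=y$. $\bar P^n$ denotes the $n$-th iterate of the kernel ($\bar P^0$ the identity), acting on nonnegative Borel $f$ by $\bar P^nf(\bar x)=\int f\,d\bar P^n(\bar x,\cdot)$. *)

(* Defs.v *)
From HB Require Import structures.
From mathcomp Require Import all_boot all_order all_algebra.
From mathcomp Require Import all_classical all_reals all_analysis.
Set Implicit Arguments. Unset Strict Implicit. Unset Printing Implicit Defensive.
Import Order.TTheory GRing.Theory Num.Theory.
Import numFieldNormedType.Exports.
Local Open Scope classical_set_scope.
Local Open Scope ring_scope.

Definition is_metric {R : realType} {Y : Type} (rho : Y -> Y -> R) : Prop :=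
  (forall x y, rho x y = 0 <-> x = y) /\
  (forall x y, rho x y = rho y x) /\
  (forall x y z, rho x z <= rho x y + rho y z).

Definition rho_open {R : realType} {Y : Type} (rho : Y -> Y -> R) (A : set Y) : Prop :=
  forall y, A y -> exists e : R, 0 < e /\ (forall z, rho y z < e -> A z).

Definition rho_cvg {R : realType} {Y : Type} (rho : Y -> Y -> R)
  (u : nat -> Y) (l : Y) : Prop :=
  (fun n => rho (u n) l) @ \oo --> (0 : R).

Definition rho_complete {R : realType} {Y : Type} (rho : Y -> Y -> R) : Prop :=
  forall u : nat -> Y,
    (forall e : R, 0 < e -> exists N, forall m n, (N <= m)%N -> (N <= n)%N -> rho (u m) (u n) < e) ->
    exists l, rho_cvg rho u l.

Definition rho_separable {R : realType} {Y : Type} (rho : Y -> Y -> R) : Prop :=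
  exists D : set Y, countable D /\
    (forall y (e : R), 0 < e -> exists z, D z /\ rho y z < e).

Definition rho_borel {R : realType} {d} {Y : measurableType d} (rho : Y -> Y -> R) : Prop :=
  forall A : set Y, measurable A <-> <<s rho_open rho >> A.

Definition semiflow {R : realType} {Y : Type} (S : R -> Y -> Y) : Prop :=
  (forall y, S 0 y = y) /\
  (forall s t y, 0 <= s -> 0 <= t -> S s (S t y) = S (s + t) y).

Definition jointly_continuous {R : realType} {Y : Type} (rho : Y -> Y -> R)
  (S : R -> Y -> Y) : Prop :=
  forall (t : nat -> R) (t0 : R) (y : nat -> Y) (y0 : Y),
    (forall n, 0 <= t n) -> 0 <= t0 ->
    t @ \oo --> t0 -> rho_cvg rho y y0 ->
    rho_cvg rho (fun n => S (t n) (y n)) (S t0 y0).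

Definition right_stochastic {R : realType} {I : finType} (pi : I -> I -> R) : Prop :=
  (forall i j, 0 <= pi i j) /\ (forall i, \sum_(j : I) pi i j = 1).

(* Xbar = Y * I * [0,oo), time coordinate represented in R (only times >= 0
   are ever reached from the points considered).
   Pbar f (y,i,s) = sum_j pi_ij int_0^oo lam e^{-lam t} int_Y f(u,j,t+s) J(S_i(t,y),du) dt *)
Definition Pbar {R : realType} {d} {Y : measurableType d} {I : finType}
  (pi : I -> I -> R) (S : I -> R -> Y -> Y) (J : R.-pker Y ~> Y) (lam : R)
  (f : Y * I * R -> \bar R) : Y * I * R -> \bar R :=
  fun x =>
    let y := x.1.1 in let i := x.1.2 in let s := x.2 in
    (\sum_(j : I) (pi i j)%:E *
       \int[@lebesgue_measure R]_(t in (`[0%R, +oo[%classic : set R))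
          ((lam * expR (- (lam * t)))%:E *
             \int[J (S i t y)]_u f (u, j, (t + s)%R)))%E.

Definition Pbar_n {R : realType} {d} {Y : measurableType d} {I : finType}
  (pi : I -> I -> R) (S : I -> R -> Y -> Y) (J : R.-pker Y ~> Y) (lam : R)
  (n : nat) (f : Y * I * R -> \bar R) : Y * I * R -> \bar R :=
  iter n (Pbar pi S J lam) f.

Definition U_t0 {R : realType} {Y : Type} {I : Type} (rho : Y -> Y -> R) (ystar : Y)
  (lam t0 : R) (x : Y * I * R) : \bar R :=
  ((expR (- (lam * (t0 - x.2))) * (rho x.1.1 ystar) ^+ 2 *
     \1_(`[0, t0]%classic : set R) x.2)%:E).

(* Main.v *)
Require Import Defs.
From HB Require Import structures.
From mathcomp Require Import all_boot all_order all_algebra.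
From mathcomp Require Import all_classical all_reals all_analysis measurable_realfun.
From mathcomp Require Import ring lra.
Import Order.TTheory GRing.Theory Num.Theory.
Import numFieldNormedType.Exports.
Local Open Scope classical_set_scope.
Local Open Scope ring_scope.
Section gen.
Local Open Scope ereal_scope.
Context d (T : measurableType d) (R : realType) (mu : {measure set T -> \bar R}).
Import HBNNSimple.

Lemma int_mono (D : set T) (f g : T -> \bar R) :
  (forall x, D x -> 0 <= f x) -> (forall x, D x -> f x <= g x) ->
  \int[mu]_(x in D) f x <= \int[mu]_(x in D) g x.
Proof.
move=> f0 fg; rewrite !(integral_mkcond D).
have F0 x : 0 <= (f \_ D) x by rewrite patchE; case: ifP => // /set_mem /f0.
have G0 x : 0 <= (g \_ D) x.
  by rewrite patchE; case: ifP => // /set_mem Dx; apply: le_trans (f0 _ Dx) (fg _ Dx).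
rewrite !ge0_integralTE//; apply: ereal_sup_le => _ [h hf <-]; exists h => // x.
apply: le_trans (hf x) _; rewrite !patchE; case: ifP => // /set_mem; exact: fg.
Qed.

Lemma sup_add_le (A B C : set \bar R) :
  (forall a, A a -> 0 <= a) -> (forall b, B b -> 0 <= b) -> A 0 -> B 0 ->
  (forall a b, A a -> B b -> a + b <= ereal_sup C) ->
  ereal_sup A + ereal_sup B <= ereal_sup C.
Proof.
move=> A0 B0 A00 B00 H.
have s0 : 0 <= ereal_sup C by rewrite -[0]adde0; exact: H.
case E : (ereal_sup C) => [r| |]; last 2 first.
- by rewrite leey.
- by rewrite E in s0.
have aub a b : A a -> B b -> a + b <= r%:E by rewrite -E; exact: H.
have afin a : A a -> a \is a fin_num.
  move=> Aa; rewrite ge0_fin_numE ?A0//; apply: le_lt_trans (ltry r).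
  by rewrite -[a]adde0; exact: aub.
have bfin b : B b -> b \is a fin_num.
  move=> Bb; rewrite ge0_fin_numE ?B0//; apply: le_lt_trans (ltry r).
  by rewrite -[b]add0e; exact: aub.
have supA : ereal_sup A <= r%:E.
  by apply: ub_ereal_sup => a Aa; rewrite -[a]adde0; exact: aub.
have supA0 : 0 <= ereal_sup A by exact: ereal_sup_ubound.
have supAfin : ereal_sup A \is a fin_num.
  by rewrite ge0_fin_numE// (le_lt_trans supA (ltry r)).
have : ereal_sup B <= r%:E - ereal_sup A.
  apply: ub_ereal_sup => b Bb.
  rewrite leeBrDr//. 
  rewrite addeC -leeBrDr; last exact: bfin.
  by apply: ub_ereal_sup => a Aa; rewrite leeBrDr ?bfin//; exact: aub.
by rewrite leeBrDr// addeC.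
Qed.

Lemma int_superadd (D : set T) (f g : T -> \bar R) :
  (forall x, D x -> 0 <= f x) -> (forall x, D x -> 0 <= g x) ->
  \int[mu]_(x in D) f x + \int[mu]_(x in D) g x <= \int[mu]_(x in D) (f x + g x).
Proof.
move=> f0 g0; rewrite !(integral_mkcond D).
have F0 x : 0 <= (f \_ D) x by rewrite patchE; case: ifP => // /set_mem /f0.
have G0 x : 0 <= (g \_ D) x by rewrite patchE; case: ifP => // /set_mem /g0.
have FG0 x : 0 <= ((fun x => f x + g x) \_ D) x.
  by rewrite patchE; case: ifP => // /set_mem Dx; rewrite adde_ge0 ?f0 ?g0.
rewrite !ge0_integralTE//; apply: sup_add_le.
- by move=> _ [h _ <-]; exact: sintegral_ge0.
- by move=> _ [h _ <-]; exact: sintegral_ge0.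
- by exists nnsfun0 => //; rewrite sintegral0.
- by exists nnsfun0 => //; rewrite sintegral0.
move=> _ _ [h1 h1f <-] [h2 h2g <-].
apply: ereal_sup_ubound; exists (h1 \+ h2)%R; last by rewrite sintegralD.
move=> x /=; rewrite EFinD; apply: le_trans (leeD (h1f x) (h2g x)) _.
by rewrite !patchE; case: ifP => //; rewrite adde0.
Qed.

End gen.
Definition Ex {R : realType} (k r t : R) : R := \1_(`]-oo, r]) t * expR (- (k * t)).

Lemma Ex_ge0 {R : realType} (k r t : R) : 0 <= Ex k r t.
Proof. by rewrite /Ex mulr_ge0 ?expR_ge0// indicE. Qed.

Lemma meas_Ex {R : realType} (k r c : R) :
  measurable_fun setT (EFin \o (fun t : R => c * Ex k r t)).
Proof.
apply/measurable_EFinP; apply: measurable_funM => //.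
apply: measurable_funM; first exact/measurable_indic.
apply: continuous_measurable_fun => x.
apply: continuous_comp; last exact: continuous_expR.
by apply: (@continuousN _ R^o); apply: continuousM => //; exact: cst_continuous.
Qed.

Lemma int_Ex {R : realType} (k r c : R) : 0 < k -> 0 <= r -> 0 <= c ->
  (\int[@lebesgue_measure R]_(t in `[0%R, +oo[%classic) (c * Ex k r t)%:E =
   (c * ((1 - expR (- (k * r))) / k))%:E)%E.
Proof.
move=> k0 r0 c0.
under eq_integral do rewrite EFinM.
rewrite ge0_integralZl; last 4 first.
- by [].
- apply: measurable_funTS; have := meas_Ex k r 1.
  by apply: eq_measurable_fun => x _ /=; rewrite mul1r.
- by move=> x _; rewrite lee_fin Ex_ge0.
- by rewrite lee_fin.
rewrite EFinM; congr (_ * _)%E.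
have -> : (fun t => (Ex k r t)%:E) = ((fun t => (expR (- (k * t)))%:E) \_ `]-oo, r]%classic).
  apply/funext => t; rewrite patchE /Ex indicE; case: ifP => _.
  by rewrite mul1r. by rewrite mul0r.
rewrite -integral_mkcondr.
have -> : `[0%R, +oo[%classic `&` `]-oo, r]%classic = `[0, r]%classic.
  by apply/seteqP; split => x /=; rewrite !in_itv/= ?andbT => /andP[].
have [->|rpos] := eqVneq r 0.
  rewrite set_itv1 integral_set1 mulr0 oppr0 expR0 subrr mul0r//.
have rgt0 : 0 < r by rewrite lt_neqAle eq_sym rpos r0.
transitivity (\int[@lebesgue_measure R]_(t in `[0%R, r]%classic) ((k^-1)%:E * (exponential_pdf k t)%:E))%E.
  apply: eq_integral => x; rewrite inE/= in_itv/= => /andP[x0 _].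
  by rewrite -EFinM exponential_pdfE// mulNr mulrA mulVf ?gt_eqF// mul1r.
rewrite ge0_integralZl//; last 3 first.
- apply/measurable_EFinP; apply: measurable_funTS; exact: measurable_exponential_pdf.
- by move=> x _; rewrite lee_fin exponential_pdf_ge0// ltW.
- by rewrite lee_fin invr_ge0 ltW.
have := exponential_prob_itv0c k rgt0; rewrite /exponential_prob => ->.
by rewrite -EFinD -EFinM mulNr mulrC.
Qed.
Lemma pow_bound {R : realType} (z e : R) : 0 <= z -> 0 < e ->
  exists K0, 1 <= K0 /\ forall t, 0 <= t -> t `^ z <= K0 * expR (e * t).
Proof.
move=> z0 e0; set c := e / (z + 1).
have c0 : 0 < c by rewrite /c divr_gt0// ltr_wpDl.
exists (expR (z * `|ln c|)); split.
  by rewrite -expR0 ler_expR mulr_ge0.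
move=> t; rewrite le_eqVlt => /orP[/eqP <-|t0].
  rewrite mulr0 expR0 mulr1 /powR eqxx; apply: le_trans (_ : 1 <= _).
    by case: (z == 0).
  by rewrite -expR0 ler_expR mulr_ge0.
rewrite /powR gt_eqF// -expRD ler_expR.
have h1 : ln (c * t) <= c * t - 1.
  have := @le_ln1Dx R (c * t - 1); rewrite addrCA subrr addr0; apply.
  rewrite ltrBrDl; have := mulr_gt0 c0 t0; lra.
have h2 : ln (c * t) = ln c + ln t by rewrite lnM// posrE.
have h3 : - ln c <= `|ln c| by rewrite -normrN ler_norm.
have h4 : z * c <= e.
  rewrite /c mulrA ler_pdivrMr ?ltr_wpDl// mulrC ler_pM2l//; lra.
have h5 : 0 <= z * (c * t - 1 - ln (c * t)) by rewrite mulr_ge0// subr_ge0.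
have h6 : 0 <= z * (`|ln c| + ln c) by rewrite mulr_ge0//; lra.
have h7 : 0 <= (e - z * c) * t by rewrite mulr_ge0// ?subr_ge0// ltW.
rewrite mulrC; move: h5 h6 h7; rewrite h2; nra.
Qed.
Section Plemmas.
Local Open Scope ereal_scope.
Context {R : realType} {d} {Y : measurableType d} {I : finType}
  (pi : I -> I -> R) (S : I -> R -> Y -> Y) (J : R.-pker Y ~> Y) (lam : R).
Hypothesis pi0 : forall i j, (0 <= pi i j)%R.
Hypothesis lam0 : (0 < lam)%R.

Let c0 t : 0 <= (lam * expR (- (lam * t)))%:E.
Proof. by rewrite lee_fin mulr_ge0 ?expR_ge0// ltW. Qed.

Lemma P_ge0 (f : Y * I * R -> \bar R) : (forall z, 0 <= f z) ->
  forall x, 0 <= Pbar pi S J lam f x.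
Proof.
move=> f0 x; rewrite /Pbar; apply: sume_ge0 => j _; apply: mule_ge0.
  by rewrite lee_fin.
apply: integral_ge0 => t _; apply: mule_ge0 => //.
exact: integral_ge0.
Qed.

Lemma P_mono (f g : Y * I * R -> \bar R) : (forall z, 0 <= f z) ->
  (forall z, f z <= g z) -> forall x, Pbar pi S J lam f x <= Pbar pi S J lam g x.
Proof.
move=> f0 fg x; rewrite /Pbar; apply: lee_sum => j _; apply: lee_wpmul2l.
  by rewrite lee_fin.
apply: int_mono => t _.
  by apply: mule_ge0 => //; exact: integral_ge0.
by apply: lee_wpmul2l => //; apply: int_mono.
Qed.

Lemma P_superadd (f g : Y * I * R -> \bar R) : (forall z, 0 <= f z) ->
  (forall z, 0 <= g z) -> forall x,
  Pbar pi S J lam f x + Pbar pi S J lam g x <= Pbar pi S J lam (fun z => f z + g z) x.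
Proof.
move=> f0 g0 x; rewrite /Pbar -big_split/=; apply: lee_sum => j _.
rewrite -ge0_muleDr; first last.
- by apply: integral_ge0 => t _; apply: mule_ge0 => //; exact: integral_ge0.
- by apply: integral_ge0 => t _; apply: mule_ge0 => //; exact: integral_ge0.
apply: lee_wpmul2l; first by rewrite lee_fin.
apply: le_trans; first apply: int_superadd.
- by move=> t _; apply: mule_ge0 => //; exact: integral_ge0.
- by move=> t _; apply: mule_ge0 => //; exact: integral_ge0.
apply: int_mono => t _.
  by apply: adde_ge0; apply: mule_ge0 => //; exact: integral_ge0.
rewrite -ge0_muleDr; try exact: integral_ge0.
apply: lee_wpmul2l => //; apply: int_superadd => *; [exact: f0| exact: g0].
Qed.

Lemma P_sum (F : nat -> Y * I * R -> \bar R) : (forall n z, 0 <= F n z) ->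
  forall N x, \sum_(0 <= n < N) Pbar pi S J lam (F n) x <=
              Pbar pi S J lam (fun z => \sum_(0 <= n < N) F n z) x.
Proof.
move=> F0; elim=> [|N IH] x.
  by rewrite big_geq//; apply: P_ge0 => z; rewrite big_geq.
rewrite big_nat_recr//=.
have -> : (fun z => \sum_(0 <= n < N.+1) F n z) =
          (fun z => \sum_(0 <= n < N) F n z + F N z).
  by apply/funext => z; rewrite big_nat_recr.
apply: le_trans; last apply: P_superadd.
- exact: leeD.
- by move=> z; apply: sume_ge0.
- by [].
Qed.

Lemma Pn_ge0 (f : Y * I * R -> \bar R) : (forall z, 0 <= f z) ->
  forall n x, 0 <= Pbar_n pi S J lam n f x.
Proof.
move=> f0; elim=> [|n IH] x //=; exact: P_ge0.
Qed.

End Plemmas.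
Lemma rho_ge0 {R : realType} {Y : Type} (rho : Y -> Y -> R) :
  is_metric rho -> forall x y, 0 <= rho x y.
Proof.
move=> [h0 [hs ht]] x y.
have := ht x y x; rewrite (proj2 (h0 x x) erefl) (hs y x) => h.
have : 0 <= rho x y *+ 2 by rewrite mulr2n.
by rewrite pmulrn_lge0.
Qed.

Lemma meas_rho {R : realType} {d} {Y : measurableType d} (rho : Y -> Y -> R) (ys : Y) :
  is_metric rho -> rho_borel rho -> measurable_fun setT (fun u => rho u ys).
Proof.
move=> hm hb; apply: (measurability _ (RGenOInfty.measurableE R)) => //.
move=> /= _ [_ [x ->] <-]; apply: measurableI => //.
apply/hb; apply: sub_sigma_algebra => u /=; rewrite in_itv/= andbT => xu.
exists (rho u ys - x); split; first by rewrite subr_gt0.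
move=> z uz /=; rewrite in_itv/= andbT.
have [_ [_ ht]] := hm; have := ht u z ys; lra.
Qed.

Lemma meas_rho2 {R : realType} {d} {Y : measurableType d} (rho : Y -> Y -> R) (ys : Y) (c k : R) :
  is_metric rho -> rho_borel rho ->
  measurable_fun setT (EFin \o (fun u => c * rho u ys ^+ 2 + k)).
Proof.
move=> hm hb; apply/measurable_EFinP; apply: measurable_funD => //.
apply: measurable_funM => //; apply: measurable_funX; exact: meas_rho.
Qed.
Lemma J_affine {R : realType} {d} {Y : measurableType d} (rho : Y -> Y -> R) (ys : Y)
  (J : R.-pker Y ~> Y) (a b c k : R) (y' : Y) :
  is_metric rho -> rho_borel rho -> 0 <= c -> 0 <= k ->
  (\int[J y']_u ((rho u ys) ^+ 2)%:E <= (a * (rho y' ys) ^+ 2 + b)%:E)%E ->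
  (\int[J y']_u (c * rho u ys ^+ 2 + k)%:E <= (c * (a * (rho y' ys) ^+ 2 + b) + k)%:E)%E.
Proof.
move=> hm hb c0 k0 hJ.
under eq_integral do rewrite EFinD.
rewrite ge0_integralD; first last.
- exact: measurable_cst.
- by move=> u _; rewrite lee_fin.
- by have := meas_rho2 rho ys c 0 hm hb; apply: eq_measurable_fun => u _ /=; rewrite addr0.
- by move=> u _; rewrite lee_fin mulr_ge0// sqr_ge0.
- by [].
under eq_integral do rewrite EFinM.
rewrite ge0_integralZl; first last.
- by rewrite lee_fin.
- by move=> u _; rewrite lee_fin sqr_ge0.
- by have := meas_rho2 rho ys 1 0 hm hb; apply: eq_measurable_fun => u _ /=; rewrite addr0 mul1r.
- by [].
rewrite integral_cst// prob_kernel mule1 EFinD EFinM leeD2r//.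
by apply: lee_wpmul2l; rewrite ?lee_fin.
Qed.

Lemma bigmax_ge {R : realType} {I : finType} (F : I -> R) i :
  F i <= \big[Num.max/0]_(j : I) F j.
Proof. by rewrite (bigD1 i)//= le_max lexx. Qed.

Lemma S_bound {R : realType} {Y : Type} {I : finType} (rho : Y -> Y -> R) (ys : Y)
  (S : I -> R -> Y -> Y) (M zeta L K0 e : R) :
  is_metric rho -> 0 <= M ->
  (forall t, 0 <= t -> \big[Num.max/0]_(i : I) rho (S i t ys) ys <= M * t `^ zeta) ->
  (forall t y1 y2 i, 0 <= t -> rho (S i t y1) (S i t y2) <= L * rho y1 y2) ->
  (forall t, 0 <= t -> t `^ zeta <= K0 * expR (e * t)) ->
  forall i t y, 0 <= t ->
  rho (S i t y) ys ^+ 2 <= 2 * L ^+ 2 * rho y ys ^+ 2 + 2 * M ^+ 2 * K0 ^+ 2 * expR (e * t) ^+ 2.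
Proof.
move=> hm M0 hS1 hS2 hK i t y t0.
have h1 := hS2 t y ys i t0.
have h2 := le_trans (bigmax_ge (fun i => rho (S i t ys) ys) i) (hS1 t t0).
have h3 : M * t `^ zeta <= M * (K0 * expR (e * t)) by rewrite ler_wpM2l// hK.
have [_ [_ ht]] := hm.
have h4 := ht (S i t y) (S i t ys) ys.
have h5 := rho_ge0 rho hm (S i t y) ys.
set x := rho (S i t y) ys in h4 h5 *.
set u := L * rho y ys in h1.
set v := M * (K0 * expR (e * t)) in h3.
have hx : x <= u + v by lra.
have -> : 2 * L ^+ 2 * rho y ys ^+ 2 + 2 * M ^+ 2 * K0 ^+ 2 * expR (e * t) ^+ 2 = 2 * u ^+ 2 + 2 * v ^+ 2.
  by rewrite /u /v; ring.
have hxx : x * x <= (u + v) * (u + v) by apply: ler_pM.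
have huv : 0 <= (u - v) * (u - v) by rewrite -expr2 sqr_ge0.
rewrite !expr2; lra.
Qed.
Lemma meas_Exr {R : realType} (k r c : R) :
  measurable_fun setT (fun t : R => c * Ex k r t).
Proof. by apply/measurable_EFinP; exact: meas_Ex. Qed.

Lemma int_Ex3 {R : realType} (k1 k2 k3 r c1 c2 c3 : R) :
  0 < k1 -> 0 < k2 -> 0 < k3 -> 0 <= r -> 0 <= c1 -> 0 <= c2 -> 0 <= c3 ->
  (\int[@lebesgue_measure R]_(t in `[0%R, +oo[%classic)
      (c1 * Ex k1 r t + c2 * Ex k2 r t + c3 * Ex k3 r t)%:E =
   (c1 * ((1 - expR (- (k1 * r))) / k1) + c2 * ((1 - expR (- (k2 * r))) / k2)
    + c3 * ((1 - expR (- (k3 * r))) / k3))%:E)%E.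
Proof.
move=> k10 k20 k30 r0 c10 c20 c30.
under eq_integral do rewrite EFinD.
rewrite ge0_integralD; first last.
- by apply: measurable_funTS; exact: meas_Ex.
- by move=> t _; rewrite lee_fin mulr_ge0 ?Ex_ge0.
- apply: measurable_funTS; apply/measurable_EFinP; apply: measurable_funD; exact: meas_Exr.
- by move=> t _; rewrite lee_fin addr_ge0 ?mulr_ge0 ?Ex_ge0.
- by [].
under eq_integral do rewrite EFinD.
rewrite ge0_integralD; first last.
- by apply: measurable_funTS; exact: meas_Ex.
- by move=> t _; rewrite lee_fin mulr_ge0 ?Ex_ge0.
- by apply: measurable_funTS; exact: meas_Ex.
- by move=> t _; rewrite lee_fin mulr_ge0 ?Ex_ge0.
- by [].
by rewrite !int_Ex// -!EFinD.
Qed.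

Definition Wf {R : realType} {Y I : Type} (rho : Y -> Y -> R) (ys : Y) (t0 g K K' : R)
  (z : Y * I * R) : \bar R :=
  (if z.2 <= t0 then expR (- (g * (t0 - z.2))) * rho z.1.1 ys ^+ 2 + K
     - K' * expR (- (g * (t0 - z.2))) else 0)%:E.

Lemma Wf_ge0 {R : realType} {Y I : Type} (rho : Y -> Y -> R) (ys : Y) (t0 g K K' : R) :
  is_metric rho -> 0 <= g -> 0 <= K' -> K' <= K -> forall z : Y * I * R,
  (0 <= Wf rho ys t0 g K K' z)%E.
Proof.
move=> hm g0 K'0 KK z; rewrite /Wf; case: ifP => // hz.
have hE : expR (- (g * (t0 - z.2))) <= 1.
  by rewrite -expR0 ler_expR oppr_le0 mulr_ge0// subr_ge0.
have hE0 := expR_ge0 (- (g * (t0 - z.2))).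
have hr : 0 <= expR (- (g * (t0 - z.2))) * rho z.1.1 ys ^+ 2 by rewrite mulr_ge0// sqr_ge0.
have : K' * expR (- (g * (t0 - z.2))) <= K'.
  by rewrite ler_piMr.
rewrite lee_fin; lra.
Qed.

Lemma final_real {R : realType} (lam g k1 k2 q b m K K' D A E1r E2r P : R) :
  0 < lam -> 0 < g -> k1 = lam - g -> 0 < k1 -> 0 < k2 -> q * lam <= k1 ->
  0 <= q -> 0 <= b -> 0 <= m -> 0 <= A -> 0 <= E1r -> E1r <= 1 -> 0 <= E2r -> 0 <= P ->
  D = lam * m / k2 + b * lam / k1 -> K = D * lam / g -> K' = D * k1 / g ->
  A * E1r * P + (lam * A * (q * P + b) * ((1 - E1r) / k1) + lam * A * m * ((1 - E2r) / k2)
     + lam * K * ((1 - A * E1r) / lam) - lam * K' * A * ((1 - E1r) / k1))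
  <= A * P + K - K' * A.
Proof.
move=> lam0 g0 hk1 k10 k20 hq q0 b0 m0 A0 E10 E11 E20 P0 hD hK hK'.
set th := lam * q / k1; set be := lam * b / k1; set mu := lam * m / k2.
have e1 : lam * A * (q * P + b) * ((1 - E1r) / k1) = th * (P * (A - A * E1r)) + be * (A - A * E1r).
  by rewrite /th /be; field; rewrite gt_eqF.
have e2 : lam * A * m * ((1 - E2r) / k2) = mu * A - mu * (A * E2r).
  by rewrite /mu; field; rewrite gt_eqF.
have e3 : lam * K * ((1 - A * E1r) / lam) = K - K * (A * E1r).
  by field; rewrite gt_eqF.
have e4 : lam * K' * A * ((1 - E1r) / k1) = K * (A - A * E1r).
  by rewrite hK hK'; field; rewrite !gt_eqF.
have e5 : K - K' = D.
  by rewrite hK hK' hk1; field; rewrite gt_eqF.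
have e6 : D = mu + be by rewrite hD /mu /be; field; rewrite !gt_eqF.
have th1 : th <= 1 by rewrite /th ler_pdivrMr// mul1r mulrC.
have h0 : 0 <= P * (A - A * E1r) by rewrite mulr_ge0// subr_ge0 ler_piMr.
have h1 : th * (P * (A - A * E1r)) <= P * (A - A * E1r) by rewrite ler_piMl.
have hbe : 0 <= be by rewrite /be divr_ge0 ?mulr_ge0// ltW.
have hmu : 0 <= mu by rewrite /mu divr_ge0 ?mulr_ge0// ltW.
have h2 : 0 <= be * (A * E1r) by apply: mulr_ge0 => //; apply: mulr_ge0.
have h3 : 0 <= mu * (A * E2r) by apply: mulr_ge0 => //; apply: mulr_ge0.
have e7 : K' * A = K * A - D * A.
  by rewrite -e5; ring.
rewrite e1 e2 e3 e4 e7 e6.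
move: h1 h2 h3; lra.
Qed.
Lemma Ex_le {R : realType} (k r t : R) : t <= r -> Ex k r t = expR (- (k * t)).
Proof. by move=> tr; rewrite /Ex indicE mem_set ?mul1r//= in_itv/=. Qed.

Lemma Ex_gt {R : realType} (k r t : R) : r < t -> Ex k r t = 0.
Proof.
move=> rt; rewrite /Ex indicE memNset ?mul0r//; rewrite /= in_itv /=.
by apply/negP; rewrite -ltNge.
Qed.

Lemma lyap {R : realType} {d} {Y : measurableType d} (rho : Y -> Y -> R) {I : finType}
  (pi : I -> I -> R) (S : I -> R -> Y -> Y) (J : R.-pker Y ~> Y) (lam : R) (ys : Y)
  (M zeta L a b K0 e g k1 k2 m D K K' t0 : R) :
  is_metric rho -> rho_borel rho -> right_stochastic pi -> 0 < lam -> 0 <= M ->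
  (forall t, 0 <= t -> \big[Num.max/0]_(i : I) rho (S i t ys) ys <= M * t `^ zeta) ->
  (forall t y1 y2 i, 0 <= t -> rho (S i t y1) (S i t y2) <= L * rho y1 y2) ->
  0 < a -> 0 <= b ->
  (forall y, (\int[J y]_u ((rho u ys) ^+ 2)%:E <= (a * (rho y ys) ^+ 2 + b)%:E)%E) ->
  (forall t, 0 <= t -> t `^ zeta <= K0 * expR (e * t)) ->
  0 < g -> k1 = lam - g -> 0 < k1 -> k2 = lam - g - 2 * e -> 0 < k2 ->
  2 * a * L ^+ 2 * lam <= k1 -> m = 2 * a * M ^+ 2 * K0 ^+ 2 ->
  D = lam * m / k2 + b * lam / k1 -> K = D * lam / g -> K' = D * k1 / g ->
  forall z : Y * I * R,
  (U_t0 rho ys lam t0 z + Pbar pi S J lam (Wf rho ys t0 g K K') z <= Wf rho ys t0 g K K' z)%E.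
Proof.
move=> hm hb [pi0 pi1] lam0 M0 hS1 hS2 a0 b0 hJ hK0 g0 hk1 k10 hk2 k20 hq hmm hD hK hK'.
move=> [[y i] s].
have m0 : 0 <= m.
  rewrite hmm; apply: mulr_ge0; last exact: sqr_ge0.
  apply: mulr_ge0; last exact: sqr_ge0.
  by apply: mulr_ge0 => //; exact: ltW.
have D0 : 0 <= D.
  rewrite hD; apply: addr_ge0; apply: divr_ge0; try exact: ltW.
    by apply: mulr_ge0 => //; exact: ltW.
  by apply: mulr_ge0 => //; exact: ltW.
have K'0 : 0 <= K'.
  by rewrite hK'; apply: divr_ge0; [apply: mulr_ge0 => //; exact: ltW | exact: ltW].
have KK' : K' <= K by rewrite hK hK' ler_pM2r ?invr_gt0// ler_wpM2l// hk1 lerBlDr lerDl ltW.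
have Wge0 := Wf_ge0 (I := I) rho ys t0 g K K' hm (ltW g0) K'0 KK'.
have hrho := rho_ge0 rho hm.
case: (leP s t0) => hs; last first.
  have P0 : Pbar pi S J lam (Wf rho ys t0 g K K') (y, i, s) = 0%E.
    rewrite /Pbar /=; apply: big1 => j _.
    rewrite integral0_eq ?mule0// => t; rewrite /= in_itv /= andbT => t0'.
    rewrite integral0_eq ?mule0// => u _; rewrite /Wf /= ifF //.
    by apply/negbTE; rewrite -ltNge; lra.
  rewrite P0 adde0 /U_t0 /Wf /= ifF; last by apply/negbTE; rewrite -ltNge.
  rewrite indicE memNset ?mulr0//= in_itv/= => /andP[_].
  by rewrite leNgt hs.
set r := t0 - s.
have r0 : 0 <= r by rewrite /r subr_ge0.
set A := expR (- (g * r)).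
set P := rho y ys ^+ 2.
set q := 2 * a * L ^+ 2.
pose c1 := lam * A * (q * P + b).
pose c2 := lam * A * m.
pose c3 := lam * K.
pose c4 := lam * K' * A.
pose V := c1 * ((1 - expR (- (k1 * r))) / k1) + c2 * ((1 - expR (- (k2 * r))) / k2)
   + c3 * ((1 - expR (- (lam * r))) / lam) - c4 * ((1 - expR (- (k1 * r))) / k1).
have A0 : 0 <= A by exact: expR_ge0.
have P0 : 0 <= P by exact: sqr_ge0.
have q0 : 0 <= q by apply: mulr_ge0; [apply: mulr_ge0 => //; exact: ltW|exact: sqr_ge0].
have c10 : 0 <= c1.
  by apply: mulr_ge0; [apply: mulr_ge0 => //; exact: ltW|apply: addr_ge0 => //; exact: mulr_ge0].
have c20 : 0 <= c2 by apply: mulr_ge0 => //; apply: mulr_ge0 => //; exact: ltW.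
have c30 : 0 <= c3 by apply: mulr_ge0 => //; [exact: ltW|exact: le_trans KK'].
have c40 : 0 <= c4 by apply: mulr_ge0 => //; apply: mulr_ge0 => //; exact: ltW.
have stepA : forall j : I, (\int[@lebesgue_measure R]_(t in `[0%R, +oo[%classic)
    ((lam * expR (- (lam * t)))%:E * \int[J (S i t y)]_u Wf rho ys t0 g K K' (u, j, (t + s)%R))
    <= V%:E)%E.
  move=> j.
  set F := (fun t => (lam * expR (- (lam * t)))%:E * \int[J (S i t y)]_u Wf rho ys t0 g K K' (u, j, (t + s)%R))%E.
  have Fge0 t : (0 <= F t)%E.
    apply: mule_ge0; first by rewrite lee_fin mulr_ge0 ?expR_ge0// ltW.
    apply: integral_ge0 => u _; have := Wge0 (u, j, (t + s)%R); exact.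
  have hpt t : 0 <= t -> (F t + (c4 * Ex k1 r t)%:E <=
      (c1 * Ex k1 r t + c2 * Ex k2 r t + c3 * Ex lam r t)%:E)%E.
    move=> t0'.
    case: (leP t r) => htr.
    - rewrite !Ex_le //.
      set B := expR (- (g * (t0 - (t + s)))).
      have hW u : Wf rho ys t0 g K K' (u, j, (t + s)%R) = (B * rho u ys ^+ 2 + (K - K' * B))%:E.
        rewrite /Wf /= ifT; last by rewrite /r in htr; lra.
        by rewrite -addrA.
      have B0 : 0 <= B by exact: expR_ge0.
      have B1 : B <= 1.
        rewrite /B -expR0 ler_expR oppr_le0; apply: mulr_ge0; first exact: ltW.
        by rewrite subr_ge0; rewrite /r in htr; lra.
      have KB : 0 <= K - K' * B.
        have : K' * B <= K' by rewrite ler_piMr.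
        lra.
      have hJa := J_affine rho ys J a b B (K - K' * B) (S i t y) hm hb B0 KB (hJ _).
      have hF : (F t <= ((lam * expR (- (lam * t))) * (B * (a * rho (S i t y) ys ^+ 2 + b) + (K - K' * B)))%:E)%E.
        rewrite /F [X in (_ <= X)%E]EFinM; apply: lee_wpmul2l; first by rewrite lee_fin mulr_ge0 ?expR_ge0// ltW.
        by under eq_integral do rewrite hW.
      apply: le_trans; first by apply: leeD; [exact: hF | exact: lexx].
      rewrite -EFinD lee_fin.
      have hEB : expR (- (lam * t)) * B = A * expR (- (k1 * t)).
        by rewrite /B /A -!expRD; congr expR; rewrite hk1 /r; ring.
      have hEQ : expR (- (k1 * t)) * expR (e * t) ^+ 2 = expR (- (k2 * t)).
        by rewrite expr2 -!expRD; congr expR; rewrite hk2 hk1; ring.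
      have hSb : rho (S i t y) ys ^+ 2 <= 2 * L ^+ 2 * P + 2 * M ^+ 2 * K0 ^+ 2 * expR (e * t) ^+ 2.
        exact: S_bound rho ys S M zeta L K0 e hm M0 hS1 hS2 hK0 i t y t0'.
      set El := expR (- (lam * t)) in hEB *.
      set E1 := expR (- (k1 * t)) in hEB hEQ *.
      set E2 := expR (- (k2 * t)) in hEQ *.
      set Q := expR (e * t) in hEQ hSb *.
      set X := rho (S i t y) ys ^+ 2 in hSb *.
      rewrite (_ : lam * El * (B * (a * X + b) + (K - K' * B)) =
         lam * (El * B) * (a * X + b) + lam * K * El - lam * K' * (El * B)); last by ring.
      rewrite hEB -hEQ /c1 /c2 /c3 /c4 /q.
      have E10 : 0 <= E1 by exact: expR_ge0.
      have key : lam * A * E1 * a * X <= lam * A * E1 * a * (2 * L ^+ 2 * P + 2 * M ^+ 2 * K0 ^+ 2 * Q ^+ 2).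
        apply: ler_wpM2l => //; apply: mulr_ge0; last exact: ltW.
        by apply: mulr_ge0 => //; apply: mulr_ge0 => //; exact: ltW.
      rewrite hmm; move: key; lra.
    - rewrite !Ex_gt // !mulr0 !addr0.
      have -> : F t = 0%E.
        rewrite /F integral0_eq ?mule0// => u _; rewrite /Wf /= ifF//.
        by apply/negbTE; rewrite -ltNge; rewrite /r in htr; lra.
      by [].
  have hint : (\int[@lebesgue_measure R]_(t in `[0%R, +oo[%classic) F t
      + \int[@lebesgue_measure R]_(t in `[0%R, +oo[%classic) (c4 * Ex k1 r t)%:E
      <= \int[@lebesgue_measure R]_(t in `[0%R, +oo[%classic)
           (c1 * Ex k1 r t + c2 * Ex k2 r t + c3 * Ex lam r t)%:E)%E.
    apply: le_trans; first apply: int_superadd.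
    - by move=> t _; exact: Fge0.
    - by move=> t _; rewrite lee_fin mulr_ge0 ?Ex_ge0.
    apply: int_mono => [t _|t].
    - by apply: adde_ge0; [exact: Fge0| rewrite lee_fin mulr_ge0 ?Ex_ge0].
    - by rewrite /= in_itv /= andbT => t0'; exact: hpt.
  rewrite int_Ex3 // int_Ex // in hint.
  by rewrite /V EFinB leeBrDr //.
have hP : (Pbar pi S J lam (Wf rho ys t0 g K K') (y, i, s) <= V%:E)%E.
  rewrite /Pbar /=.
  apply: (@le_trans _ _ (\sum_(j : I) ((pi i j)%:E * V%:E))%E).
    by apply: lee_sum => j _; apply: lee_wpmul2l; [rewrite lee_fin | exact: stepA].
  rewrite (eq_bigr (fun j => (pi i j * V)%:E)); last by move=> j _; rewrite EFinM.
  by rewrite sumEFin -mulr_suml pi1 mul1r.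
have hU : (U_t0 rho ys lam t0 (y, i, s) <= (expR (- (lam * r)) * P)%:E)%E.
  rewrite /U_t0 /= lee_fin -/r -/P; apply: ler_piMr.
    by apply: mulr_ge0 => //; exact: expR_ge0.
  by rewrite indicE; case: (_ \in _).
apply: le_trans; first by apply: leeD; [exact: hU | exact: hP].
rewrite /Wf /= ifT // -/r -/A -/P -EFinD lee_fin.
have hE : expR (- (lam * r)) = A * expR (- (k1 * r)).
  by rewrite /A -expRD; congr expR; rewrite hk1; ring.
rewrite /V hE /c1 /c2 /c3 /c4.
have E10 : 0 <= expR (- (k1 * r)) by exact: expR_ge0.
have E11 : expR (- (k1 * r)) <= 1.
  by rewrite -expR0 ler_expR oppr_le0; apply: mulr_ge0 => //; exact: ltW.
have E20 : 0 <= expR (- (k2 * r)) by exact: expR_ge0.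
exact: (@final_real R lam g k1 k2 q b m K K' D A (expR (- (k1 * r))) (expR (- (k2 * r))) P
  lam0 g0 hk1 k10 k20 hq q0 b0 m0 A0 E10 E11 E20 P0 hD hK hK').
Qed.
Theorem lemma5p1 (R : realType) (d : measure_display) (Y : measurableType d)
  (rho : Y -> Y -> R) (I : finType) (pi : I -> I -> R) (S : I -> R -> Y -> Y)
  (J : R.-pker Y ~> Y) (lam : R) (ystar : Y)
  (M zeta L a b : R) :
  is_metric rho -> rho_complete rho -> rho_separable rho -> rho_borel rho ->
  right_stochastic pi ->
  (forall i, semiflow (S i)) -> (forall i, jointly_continuous rho (S i)) ->
  0 < lam ->
  (* (S1') *)
  0 <= M -> 0 <= zeta ->
  (forall t, 0 <= t -> \big[Num.max/0]_(i : I) rho (S i t ystar) ystar <= M * t `^ zeta) ->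
  (* (S2') *)
  0 < L ->
  (forall t y1 y2 i, 0 <= t -> rho (S i t y1) (S i t y2) <= L * rho y1 y2) ->
  (* (J1') *)
  0 < a -> 0 <= b ->
  (forall y, (\int[J y]_u ((rho u ystar) ^+ 2)%:E <= (a * (rho y ystar) ^+ 2 + b)%:E)%E) ->
  2 * a * L ^+ 2 < 1 ->
  exists Gamma C : R, 0 < Gamma /\ 0 <= C /\
    forall t0 : R, 0 <= t0 -> forall (y : Y) (i : I),
      (\sum_(0 <= n <oo) Pbar_n pi S J lam n (U_t0 rho ystar lam t0) (y, i, 0%R)
         <= (expR (- (Gamma * t0)) * (rho y ystar) ^+ 2 + C)%:E)%E.
Proof.
move=> hm _ _ hb hpi _ _ lam0 M0 z0 hS1 L0 hS2 a0 b0 hJ hq.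
have [pi0 _] := hpi.
set q := 2 * a * L ^+ 2.
have q0 : 0 <= q.
  by apply: mulr_ge0; [apply: mulr_ge0 => //; exact: ltW|exact: sqr_ge0].
set g := lam * (1 - q) / 2.
set k1 := lam - g.
set e := k1 / 4.
set k2 := lam - g - 2 * e.
have g0 : 0 < g by rewrite /g divr_gt0// mulr_gt0// subr_gt0.
have hk1 : k1 = lam * (1 + q) / 2 by rewrite /k1 /g; field.
have k10 : 0 < k1 by rewrite hk1 divr_gt0// mulr_gt0// ltr_wpDr.
have e0 : 0 < e by rewrite /e divr_gt0.
have k20 : 0 < k2 by rewrite /k2 -/k1 /e; lra.
have hqk : 2 * a * L ^+ 2 * lam <= k1.
  rewrite -/q hk1; have : 0 <= lam * (1 - q).
    by apply: mulr_ge0; [exact: ltW| rewrite subr_ge0; exact: ltW].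
  have -> : lam * (1 + q) / 2 = q * lam + lam * (1 - q) / 2 by field.
  lra.
have [K0 [K01 hK0]] := pow_bound zeta e z0 e0.
set m := 2 * a * M ^+ 2 * K0 ^+ 2.
set D := lam * m / k2 + b * lam / k1.
set K := D * lam / g.
set K' := D * k1 / g.
have m0 : 0 <= m.
  rewrite /m; apply: mulr_ge0; last exact: sqr_ge0.
  apply: mulr_ge0; last exact: sqr_ge0.
  by apply: mulr_ge0 => //; exact: ltW.
have D0 : 0 <= D.
  rewrite /D; apply: addr_ge0; apply: divr_ge0; try exact: ltW.
    by apply: mulr_ge0 => //; exact: ltW.
  by apply: mulr_ge0 => //; exact: ltW.
have K0' : 0 <= K.
  by rewrite /K; apply: divr_ge0; [apply: mulr_ge0 => //; exact: ltW | exact: ltW].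
have K'0 : 0 <= K'.
  by rewrite /K'; apply: divr_ge0; [apply: mulr_ge0 => //; exact: ltW | exact: ltW].
have KK' : K' <= K.
  rewrite /K /K' ler_pM2r ?invr_gt0// ler_wpM2l// /k1 lerBlDr lerDl; exact: ltW.
exists g, K; split => //; split => //.
move=> t0 t00 y i.
have Ly := @lyap R d Y rho I pi S J lam ystar M zeta L a b K0 e g k1 k2 m D K K' t0
  hm hb hpi lam0 M0 hS1 hS2 a0 b0 hJ hK0 g0 erefl k10 erefl k20 hqk erefl erefl erefl erefl.
have Wge0 := Wf_ge0 (I := I) rho ystar t0 g K K' hm (ltW g0) K'0 KK'.
have U0 : forall z : Y * I * R, (0 <= U_t0 rho ystar lam t0 z)%E.
  move=> z; rewrite /U_t0 lee_fin; apply: mulr_ge0; first by apply: mulr_ge0; [exact: expR_ge0|exact: sqr_ge0].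
  by rewrite indicE; case: (_ \in _).
have Pn0 := Pn_ge0 pi S J lam pi0 lam0 _ U0.
have partial : forall N z, (\sum_(0 <= n < N) Pbar_n pi S J lam n (U_t0 rho ystar lam t0) z
     <= Wf rho ystar t0 g K K' z)%E.
  elim=> [|N IH] z; first by rewrite big_geq.
  rewrite big_nat_recl //.
  rewrite (_ : \sum_(0 <= i0 < N) Pbar_n pi S J lam i0.+1 (U_t0 rho ystar lam t0) z =
     \sum_(0 <= i0 < N) Pbar pi S J lam (Pbar_n pi S J lam i0 (U_t0 rho ystar lam t0)) z)%E //.
  apply: le_trans (Ly z); apply: leeD => //.
  apply: le_trans; first exact: (P_sum pi S J lam pi0 lam0 (fun n => Pbar_n pi S J lam n (U_t0 rho ystar lam t0)) Pn0).
  apply: P_mono => // w.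
  by apply: sume_ge0 => n _; exact: Pn0.
apply: (@le_trans _ _ (Wf rho ystar t0 g K K' (y, i, 0%R))).
  apply: lime_le; first exact: is_cvg_nneseries.
  by apply: nearW => N; exact: partial.
rewrite /Wf /= ifT // subr0 lee_fin.
have : 0 <= K' * expR (- (g * t0)) by apply: mulr_ge0 => //; exact: expR_ge0.
lra.
Qed.
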